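(* Let $G$ be a finite simple graph on $2i$ vertices and let $J\in\mathcal{P}(G)$. Then for each integer $k$ with $0\le k\le i-\frac{|J|}{2}$, $$|C_k(J;G)| = |C_k(\emptyset;G^\ast_J)|.$$
   Context: All graphs are finite simple graphs; $G|_I$ is the induced subgraph on $I\subseteq V(G)$. $\mathcal{E}\mathcal{C}(G)=\{I\subseteq V(G): G|_I \text{ has no connected component of odd order}\}$. For a graph $G$ of even order, $\mathcal{P}(G)=\mathcal{E}\mathcal{C}(G)\cup\{V(G)\}$, a poset under inclusion. For $I\in\mathcal{P}(G)$ and $k\ge0$, $C_k(I;G)$ is the set of chains $I=I_0\subsetneq I_1\subsetneq\cdots\subsetneq I_k=V(G)$ with $I_j\in\mathcal{P}(G)$ for all $1\le j\le k$ (so $C_0(I;G)$ is $\{(V(G))\}$ if $I=V(G)$ and empty otherwise). The reconnected complement $G^\ast_J$ is the graph on $V(G)\setminus J$ in which $\{a,b\}$ is an edge iff there is a path from $a$ to $b$ in $G|_{J\cup\{a,b\}}$. *)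

(* Defs.v *)
From mathcomp Require Import all_boot.
Set Implicit Arguments. Unset Strict Implicit. Unset Printing Implicit Defensive.

(* A (simple) graph is given by a vertex set V : {set T} inside an ambient
   finite type T and an edge relation e : rel T (only its restriction to V
   matters). *)
Section Graphs.
Variable T : finType.

Definition irel (e : rel T) (S : {set T}) : rel T :=
  [rel x y | [&& x \in S, y \in S & e x y]].

Definition pathin (e : rel T) (S : {set T}) (a b : T) : bool :=
  [&& a \in S, b \in S & connect (irel e S) a b].

Definition comp (e : rel T) (I : {set T}) (x : T) : {set T} :=
  [set y in I | connect (irel e I) x y].

Definition EC (V : {set T}) (e : rel T) : {set {set T}} :=
  [set I : {set T} | (I \subset V) && [forall x in I, ~~ odd #|comp e I x|]].

Definition Pset (V : {set T}) (e : rel T) : {set {set T}} := V |: EC V e.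

Definition chains (V : {set T}) (e : rel T) (I : {set T}) (k : nat)
  : {set {ffun 'I_k.+1 -> {set T}}} :=
  [set c : {ffun 'I_k.+1 -> {set T}} |
     [&& c ord0 == I, c ord_max == V,
         [forall j : 'I_k.+1, (0 < j) ==> (c (inord j.-1) \proper c j)] &
         [forall j : 'I_k.+1, (0 < j) ==> (c j \in Pset V e)]]].

(* edge relation of the reconnected complement G^*_J (on vertex set V :\: J):
   a ~ b iff a <> b and there is a path from a to b in G|_{J ∪ {a,b}} *)
Definition rc (e : rel T) (J : {set T}) : rel T :=
  [rel a b | (a != b) && pathin e (J :|: [set a; b]) a b].

End Graphs.

(* Main.v *)
Require Import Defs.
From mathcomp Require Import all_boot.
Set Implicit Arguments. Unset Strict Implicit. Unset Printing Implicit Defensive.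

Section Proof.
Variable T : finType.
Variable e : rel T.
Hypothesis e_sym : symmetric e.
Hypothesis e_irr : irreflexive e.

Lemma irel_sym (S : {set T}) : symmetric (irel e S).
Proof. by move=> x y; rewrite /irel /= e_sym; case: (x \in S); case: (y \in S). Qed.

Lemma csym (S : {set T}) : connect_sym (irel e S).
Proof. exact: sym_connect_sym (irel_sym S). Qed.

Lemma conn_mono (S S' : {set T}) (x y : T) : S \subset S' -> connect (irel e S) x y -> connect (irel e S') x y.
Proof.
move=> sub; apply: connect_sub => a b /and3P[aS bS eab]; apply: connect1.
by apply/and3P; split=> //; [exact: (subsetP sub _ aS) | exact: (subsetP sub _ bS)].
Qed.

Lemma conn_equiv (S : {set T}) : equivalence_rel (connect (irel e S)).
Proof.
move=> x y z; split; first exact: connect0.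
move=> cxy; apply/idP/idP => h; last exact: connect_trans cxy h.
by apply: connect_trans h; rewrite csym.
Qed.

Lemma even_inter (I J : {set T}) (x : T) : J \subset I -> (forall y, y \in J -> ~~ odd #|Defs.comp e J y|) ->
  ~~ odd #|Defs.comp e I x :&: J|.
Proof.
move=> sJI hJ.
have hP := @equivalence_partitionP _ (connect (irel e J)) (Defs.comp e I x :&: J)
  (fun a b c _ _ _ => conn_equiv J a b c).
rewrite (card_partition hP) -dvdn2; apply: dvdn_sum => A /imsetP[z zD ->].
have -> : [set y in Defs.comp e I x :&: J | connect (irel e J) z y] = Defs.comp e J z.
  apply/setP => y; rewrite !inE.
  case yJ: (y \in J); rewrite ?andbF //=.
  apply/idP/idP => [/andP[_ ->]//|czy]; rewrite czy andbT.
  move: zD; rewrite !inE => /andP[/andP[_ cxz] _].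
  rewrite (subsetP sJI _ yJ) andbT /=.
  exact: connect_trans cxz (conn_mono sJI czy).
by rewrite dvdn2; apply: hJ; move: zD; rewrite inE => /andP[].
Qed.

Lemma rc_path (J I : {set T}) (a b : T) : J \subset I -> a \in I -> b \in I -> rc e J a b ->
  connect (irel e I) a b.
Proof.
move=> sJI aI bI /andP[_ /and3P[_ _ c]]; apply: conn_mono c.
by rewrite !subUset sJI !sub1set aI bI.
Qed.

Lemma walk (J I : {set T}) (y : T) : J \subset I -> y \in I :\: J ->
  forall p u, path (irel e I) u p -> last u p = y ->
   (u \in I :\: J -> connect (irel (rc e J) (I :\: J)) u y) /\
   (u \in J -> exists2 w, w \in I :\: J &
      connect (irel (rc e J) (I :\: J)) w y /\ connect (irel e (J :|: [set w])) w u).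
Proof.
move=> sJI yI'; elim=> [|v p IH] u /=.
  move=> _ ->; split=> // yJ; by move: yI'; rewrite inE yJ.
case/andP=> /and3P[uI vI euv] pth ly.
have [IH1 IH2] := IH v pth ly.
case vJ: (v \in J).
  have [w wI' [cwy cwv]] := IH2 vJ.
  split.
    move=> uI'; case: (eqVneq u w) => [->//|uw].
    apply: connect_trans cwy; apply: connect1; rewrite /irel /= uI' wI' /= /= /rc /= uw /=.
    rewrite /pathin !inE !eqxx /= !orbT /=.
    apply: (connect_trans (y:=v)); first by apply: connect1; rewrite /irel /= !inE vJ !eqxx /= orbT.
    rewrite csym; apply: conn_mono cwv.
    by rewrite subUset subsetUl /= sub1set !inE !eqxx orbT ?orbT.
  move=> uJ; exists w => //; split=> //.
  apply: connect_trans cwv _; apply: connect1; by rewrite /irel /= !inE vJ uJ e_sym.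
have vI' : v \in I :\: J by rewrite inE vJ vI.
have cvy := IH1 vI'.
split.
  move=> uI'; apply: connect_trans cvy; apply: connect1; rewrite /irel /= uI' vI' /= /rc /=.
  have -> : u != v by apply/eqP => uv; move: euv; rewrite uv e_irr.
  rewrite /pathin !inE !eqxx /= !orbT /=.
  by apply: connect1; rewrite /irel /= !inE !eqxx /= !orbT.
move=> uJ; exists v => //; split=> //.
by apply: connect1; rewrite /irel /= !inE eqxx uJ e_sym orbT.
Qed.

Lemma comp_rc (J I : {set T}) (x : T) : J \subset I -> x \in I :\: J ->
  Defs.comp (rc e J) (I :\: J) x = Defs.comp e I x :\: J.
Proof.
move=> sJI xI'; apply/setP => y; rewrite [LHS]inE [RHS]inE [y \in Defs.comp e I x]inE.
case yI': (y \in I :\: J); move: (yI'); rewrite inE.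
  case/andP=> -> yI /=; rewrite yI /=; apply/idP/idP.
    apply: connect_sub => a b /and3P[aI' bI' rab]; apply: rc_path rab => //.
      by move: aI'; rewrite inE => /andP[].
    by move: bI'; rewrite inE => /andP[].
  case/connectP=> p pth ly.
  have xI : x \in I by move: xI'; rewrite inE => /andP[].
  exact: ((walk sJI yI' pth (esym ly)).1 xI').
by case: (y \in J) => //= ->.
Qed.

Lemma comp_eq (I : {set T}) (x y : T) : connect (irel e I) x y -> Defs.comp e I x = Defs.comp e I y.
Proof.
move=> cxy; apply/setP => z; rewrite !inE; congr andb.
exact: ((conn_equiv I x y z).2 cxy).
Qed.

Lemma key (J I : {set T}) : J \in Pset setT e -> J \subset I ->
  (I \in Pset setT e) = (I :\: J \in Pset (setT :\: J) (rc e J)).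
Proof.
move=> HJ sJI.
rewrite /Pset !in_setU1.
have -> : (I :\: J == setT :\: J) = (I == setT).
  apply/eqP/eqP => [h|->//]; apply/setP => z; rewrite inE.
  case zJ: (z \in J); first exact: subsetP sJI z zJ.
  have: z \in setT :\: J by rewrite !inE zJ.
  by rewrite -h inE => /andP[_ ->].
case: (I =P setT) => //= IneqT.
rewrite in_setU1 in HJ; case/orP: HJ => [/eqP JT|JEC].
  by exfalso; apply: IneqT; apply/eqP; rewrite eqEsubset subsetT -JT sJI.
move: JEC; rewrite inE => /andP[_ /forall_inP hJ].
rewrite !inE subsetT setSD ?subsetT //=.
apply/forall_inP/forall_inP => H x xI.
  have xI1 : x \in I by move: xI; rewrite inE => /andP[].
  have h1 := H x xI1.
  rewrite -(cardsID J (Defs.comp e I x)) oddD (negbTE (even_inter x sJI hJ)) /= in h1.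
  by rewrite comp_rc.
rewrite -(cardsID J (Defs.comp e I x)) oddD (negbTE (even_inter x sJI hJ)) /=.
case: (set_0Vmem (Defs.comp e I x :\: J)) => [->|[y yC]]; first by rewrite cards0.
move: (yC); rewrite !inE => /andP[yJ /andP[yI cxy]].
rewrite (comp_eq cxy) -comp_rc //; first apply: H; by rewrite inE yJ yI.
Qed.

Lemma subD (J X Y : {set T}) : J \subset X -> J \subset Y ->
  (X :\: J \subset Y :\: J) = (X \subset Y).
Proof.
move=> hX hY; apply/idP/idP => [H|]; last by move=> h; apply: setSD.
apply/subsetP => z zX; case zJ: (z \in J); first exact: subsetP hY z zJ.
have : z \in X :\: J by rewrite inE zJ zX.
by move/(subsetP H); rewrite inE => /andP[].
Qed.

Lemma properD (J X Y : {set T}) : J \subset X -> J \subset Y ->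
  (X :\: J \proper Y :\: J) = (X \proper Y).
Proof. by move=> hX hY; rewrite !properE !subD. Qed.

Lemma UDK (X J : {set T}) : X \subset setT :\: J -> (X :|: J) :\: J = X.
Proof.
move=> sub; apply/setP => z; rewrite !inE; case zJ: (z \in J); rewrite /= ?orbF //.
apply/esym/negbTE/negP => zX; move: (subsetP sub z zX); by rewrite !inE zJ.
Qed.

Lemma DUK (X J : {set T}) : J \subset X -> (X :\: J) :|: J = X.
Proof.
move=> sub; apply/setP => z; rewrite !inE; case zJ: (z \in J); rewrite /= ?andbT ?orbF //.
by rewrite (subsetP sub z zJ).
Qed.

Lemma properU (J X Y : {set T}) : X \subset setT :\: J -> Y \subset setT :\: J ->
  (X :|: J \proper Y :|: J) = (X \proper Y).
Proof.
move=> hX hY.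
by rewrite -(@properD J (X :|: J) (Y :|: J)) ?subsetUr // !UDK.
Qed.

Lemma chainA_sup (J : {set T}) k c : c \in chains setT e J k -> forall j, J \subset c j.
Proof.
rewrite inE => /and4P[/eqP c0 _ /forallP hp _].
suff H : forall n, n < k.+1 -> J \subset c (inord n).
  by move=> j; rewrite -(inord_val j); exact: H (ltn_ord j).
elim=> [_|n IH ltn].
  have -> : (inord 0 : 'I_k.+1) = ord0 by apply: val_inj; rewrite /= inordK.
  by rewrite c0.
have := hp (inord n.+1); rewrite inordK //= => /proper_sub; apply: subset_trans; exact: IH (ltnW ltn).
Qed.

Lemma chainB_sub (J : {set T}) k c : c \in chains (setT :\: J) (rc e J) set0 k ->
  forall j, c j \subset setT :\: J.
Proof.
rewrite inE => /and4P[/eqP c0 _ _ /forallP hP] j.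
case: (posnP j) => [j0|jpos].
  have -> : j = ord0 by apply: val_inj.
  by rewrite c0 sub0set.
have := hP j; rewrite jpos /= /Pset in_setU1 => /orP[/eqP->//|].
by rewrite inE => /andP[].
Qed.

End Proof.

Theorem mainTheorem5 (T : finType) (e : rel T) (i : nat)
  (e_sym : symmetric e) (e_irr : irreflexive e)
  (cardT : #|T| = (2 * i)%N)
  (J : {set T}) (HJ : J \in Pset [set: T] e)
  (k : nat) (hk : (k <= i - #|J| %/ 2)%N) :
  #|chains [set: T] e J k| = #|chains ([set: T] :\: J) (rc e J) set0 k|.
Proof.
set A := chains _ _ _ _; set B := chains _ _ _ _.
pose f := fun c : {ffun 'I_k.+1 -> {set T}} => [ffun j => c j :\: J].
pose g := fun c : {ffun 'I_k.+1 -> {set T}} => [ffun j => c j :|: J].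
have fA : forall c, c \in A -> f c \in B.
  move=> c cA; have sup := chainA_sup cA.
  move: cA; rewrite inE => /and4P[/eqP c0 /eqP cT /forallP hp /forallP hP].
  rewrite inE; apply/and4P; split.
  - by rewrite ffunE c0 setDv.
  - by rewrite ffunE cT.
  - apply/forallP => j; apply/implyP => jpos; rewrite !ffunE properD //.
    exact: (implyP (hp j)) jpos.
  - apply/forallP => j; apply/implyP => jpos; rewrite ffunE -key //.
    exact: (implyP (hP j)) jpos.
have gB : forall c, c \in B -> g c \in A.
  move=> c cB; have sub := chainB_sub cB.
  move: cB; rewrite inE => /and4P[/eqP c0 /eqP cT /forallP hp /forallP hP].
  rewrite inE; apply/and4P; split.
  - by rewrite ffunE c0 set0U.
  - by rewrite ffunE cT DUK ?subsetT.
  - apply/forallP => j; apply/implyP => jpos; rewrite !ffunE properU //.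
    exact: (implyP (hp j)) jpos.
  - apply/forallP => j; apply/implyP => jpos; rewrite ffunE (key e_sym e_irr (J:=J)) ?subsetUr //.
    rewrite UDK //; exact: (implyP (hP j)) jpos.
have fg : forall c, c \in B -> f (g c) = c.
  move=> c cB; apply/ffunP => j; rewrite !ffunE UDK //; exact: chainB_sub cB j.
have gf : forall c, c \in A -> g (f c) = c.
  move=> c cA; apply/ffunP => j; rewrite !ffunE DUK //; exact: chainA_sup cA j.
rewrite -(card_in_imset (f:=f) (D:=A)); last first.
  by move=> c1 c2 h1 h2 eq; rewrite -(gf c1 h1) -(gf c2 h2) eq.
apply: eq_card => c; apply/imsetP/idP => [[c' c'A ->]|cB]; first exact: fA.
by exists (g c); [exact: gB | rewrite fg].
Qed.
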